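(* Let $p$ be a positive integer with $\tau(p) > m'$, where $m'$ is the largest number of linearly independent constraint matrices that can be simultaneously active, i.e. $m' = \max_{X\in\mathscr{X}} \dim \operatorname{span}\{A_i : A_i\bullet X = b_i\}$. Fix $A_1,\dots,A_m$ and $b$. Then for a generic $C\in\mathbb{S}^n$ (that is, for all $C$ outside a Lebesgue measure zero subset of $\mathbb{S}^n$), problem (BM) has no spurious 2-critical points: every 2-critical point $Y$ of (BM) is a global minimizer of (BM), and hence $YY^T$ is an optimal solution of (SDP).
   Context: Let $\mathbb{S}^n$ be the space of real symmetric $n\times n$ matrices, with inner product $A\bullet B=\operatorname{trace}(A^TB)$ (also used for $A\in\mathbb{S}^n$, $B\in\mathbb{R}^{n\times n}$), and $\mathbb{S}^n_+$ the cone of positive semidefinite matrices. Let $m=m_1+m_2$, let $C,A_1,\dots,A_m\in\mathbb{S}^n$, $b\in\mathbb{R}^m$, $\mathcal{A}(X)=(A_1\bullet X,\dots,A_m\bullet X)$ and $\mathcal{A}^*(\lambda)=\sum_i\lambda_iA_i$. Let $\mathscr{X}=\{X\in\mathbb{S}^n_+ : A_i\bullet X=b_i \ (i\le m_1),\ A_i\bullet X\ge b_i\ (m_1<i\le m)\}$; assume $\mathscr{X}$ is nonempty and that (SDP): $\min_{X\in\mathscr{X}} C\bullet X$ attains its minimum. Problem (BM) is $\min_{Y\in\mathbb{R}^{n\times p}} C\bullet YY^T$ subject to $YY^T\in\mathscr{X}$. For $Y$, let $I(Y)=\{i\in[m]: A_i\bullet YY^T=b_i\}$ and $S(\lambda)=C-\mathcal{A}^*(\lambda)$.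 A point $Y$ is 1-critical for (BM) if $YY^T\in\mathscr{X}$ and there is $\lambda\in\mathbb{R}^{m_1}\times\mathbb{R}^{m_2}_+$ with $\lambda_i=0$ for $i\notin I(Y)$ and $S(\lambda)Y=0$; it is 2-critical if moreover (for such a $\lambda$) $S(\lambda)\bullet UU^T\ge 0$ for all $U\in\mathbb{R}^{n\times p}$ with $A_i\bullet UY^T=0$ for all $i\in I(Y)$. A critical point is spurious if it is not a global minimizer of (BM). $\tau(k)=\binom{k+1}{2}$. *)

(* Defs.v *)
From HB Require Import structures.
From mathcomp Require Import all_boot all_order all_algebra.
From mathcomp Require Import reals.
Set Implicit Arguments. Unset Strict Implicit. Unset Printing Implicit Defensive.
Import Order.TTheory GRing.Theory Num.Theory.
Local Open Scope ring_scope.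

Section Defs.
Variable R : realType.

Definition tau (k : nat) : nat := 'C(k.+1, 2).

Definition dotm (k l : nat) (A B : 'M[R]_(k, l)) : R := \tr (A^T *m B).

Definition symm (n : nat) (X : 'M[R]_n) : Prop := X^T = X.

Definition psd (n : nat) (X : 'M[R]_n) : Prop :=
  symm X /\ forall v : 'cV[R]_n, 0 <= (v^T *m X *m v) 0 0.

Variables (n m1 m2 : nat) (A : 'I_(m1 + m2) -> 'M[R]_n) (b : 'I_(m1 + m2) -> R).

Definition feasible (X : 'M[R]_n) : Prop :=
  psd X /\ forall i : 'I_(m1 + m2),
    if (i < m1)%N then dotm (A i) X = b i else b i <= dotm (A i) X.

Definition activeb (X : 'M[R]_n) (i : 'I_(m1 + m2)) : bool := dotm (A i) X == b i.

Definition active_dim (X : 'M[R]_n) : nat :=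
  \rank (\matrix_(i < m1 + m2) (if activeb X i then mxvec (A i) else 0)).

Definition sdp_attains (C : 'M[R]_n) : Prop :=
  exists2 X0, feasible X0 & forall X, feasible X -> dotm C X0 <= dotm C X.

Definition Smat (C : 'M[R]_n) (lam : 'I_(m1 + m2) -> R) : 'M[R]_n :=
  C - \sum_(i < m1 + m2) lam i *: A i.

Variable p : nat.

Definition first_order_mult (C : 'M[R]_n) (Y : 'M[R]_(n, p))
    (lam : 'I_(m1 + m2) -> R) : Prop :=
  (forall i : 'I_(m1 + m2), (m1 <= i)%N -> 0 <= lam i) /\
  (forall i, ~~ activeb (Y *m Y^T) i -> lam i = 0) /\
  Smat C lam *m Y = 0.

Definition one_critical (C : 'M[R]_n) (Y : 'M[R]_(n, p)) : Prop :=
  feasible (Y *m Y^T) /\ exists lam, first_order_mult C Y lam.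

Definition two_critical (C : 'M[R]_n) (Y : 'M[R]_(n, p)) : Prop :=
  feasible (Y *m Y^T) /\ exists lam, first_order_mult C Y lam /\
    forall U : 'M[R]_(n, p),
      (forall i, activeb (Y *m Y^T) i -> dotm (A i) (U *m Y^T) = 0) ->
      0 <= dotm (Smat C lam) (U *m U^T).

Definition bm_global_min (C : 'M[R]_n) (Y : 'M[R]_(n, p)) : Prop :=
  feasible (Y *m Y^T) /\
  forall Y' : 'M[R]_(n, p), feasible (Y' *m Y'^T) ->
    dotm C (Y *m Y^T) <= dotm C (Y' *m Y'^T).

Definition sdp_optimal (C : 'M[R]_n) (X : 'M[R]_n) : Prop :=
  feasible X /\ forall X', feasible X' -> dotm C X <= dotm C X'.

End Defs.

(* S^n is identified with R^{tau(n)} through the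
   upper-triangular coordinates (C i j)_{i <= j}; a set N is null iff for every
   eps > 0 it is covered by countably many boxes (in these coordinates) of total
   volume <= eps (Lebesgue outer measure zero).  The flag [used] allows an
   empty/finite family of boxes (needed for the degenerate case n = 0). *)
Definition sym_null (R : realType) (n : nat) (N : 'M[R]_n -> Prop) : Prop :=
  forall eps : R, 0 < eps ->
  exists (used : nat -> bool) (lo hi : nat -> 'M[R]_n),
    (forall k (i j : 'I_n), (i <= j)%N -> lo k i j <= hi k i j) /\
    (forall C : 'M[R]_n, symm C -> N C ->
       exists2 k, used k & forall i j : 'I_n, (i <= j)%N -> lo k i j <= C i j <= hi k i j) /\
    (forall K : nat,
       \sum_(k < K | used k) \prod_(ij : 'I_n * 'I_n | (ij.1 <= ij.2)%N)
          (hi k ij.1 ij.2 - lo k ij.1 ij.2) <= eps).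

(* Main.v *)
Require Import Defs.
From HB Require Import structures.
From mathcomp Require Import all_boot all_order all_algebra.
From mathcomp Require Import reals.
From Stdlib Require Import ClassicalEpsilon Classical.
From mathcomp Require Import ring lra zify.
Set Implicit Arguments. Unset Strict Implicit. Unset Printing Implicit Defensive.
Import Order.TTheory GRing.Theory Num.Theory.
Local Open Scope ring_scope.

Lemma choice_nat {X : Type} (P : nat -> X -> Prop) :
  (forall a, exists x, P a x) -> exists g : nat -> X, forall a, P a (g a).
Proof.
move=> H; exists (fun a => proj1_sig (constructive_indefinite_description _ (H a))).
by move=> a; case: (constructive_indefinite_description _ (H a)).
Qed.

Section Null.
Variables (R : realType) (n : nat).

Definition vol (lo hi : 'M[R]_n) : R :=
  \prod_(ij : 'I_n * 'I_n | (ij.1 <= ij.2)%N) (hi ij.1 ij.2 - lo ij.1 ij.2).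

Lemma vol_ge0 (lo hi : 'M[R]_n) :
  (forall i j : 'I_n, (i <= j)%N -> lo i j <= hi i j) -> 0 <= vol lo hi.
Proof.
move=> H; rewrite /vol; apply: prodr_ge0 => ij Hij; rewrite subr_ge0; exact: H.
Qed.

Lemma null_sub (N1 N2 : 'M[R]_n -> Prop) :
  (forall C, symm C -> N1 C -> N2 C) -> sym_null N2 -> sym_null N1.
Proof.
move=> H12 H2 eps eps0; have [used [lo [hi [H1 [Hc Hs]]]]] := H2 eps eps0.
exists used, lo, hi; split=> //; split=> // C sC N1C; exact: Hc (H12 _ sC N1C).
Qed.

Lemma null_empty (N : 'M[R]_n -> Prop) : (forall C, ~ N C) -> sym_null N.
Proof.
move=> H eps eps0; exists (fun _ => false), (fun _ => 0), (fun _ => 0).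
split=> //; split; first by move=> C _ /H.
by move=> K; rewrite big_pred0 // ltW.
Qed.

Lemma geom_sum (eps : R) (A : nat) :
  \sum_(a < A) eps / 2%:R ^+ a.+1 = eps - eps / 2%:R ^+ A.
Proof.
elim: A => [|A IH]; first by rewrite big_ord0 expr0 divr1 subrr.
rewrite big_ord_recr /= IH exprS.
have h2 : (2%:R : R) != 0 by rewrite pnatr_eq0.
have hA : (2%:R : R) ^+ A != 0 by rewrite expf_neq0.
by field; rewrite ?h2 ?hA.
Qed.

Lemma sum_indic_le1 (K c : nat) : \sum_(k < K) (((k : nat) == c)%:R : R) <= 1.
Proof.
case: (ltnP c K) => hc.
  rewrite (bigD1 (Ordinal hc)) //= eqxx big1 ?addr0 // => k hk.
  suff -> : ((k : nat) == c) = false by [].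
  by apply/negbTE; apply: contra hk => /eqP e; apply/eqP/val_inj.
rewrite big1 ?ler01 // => k _.
suff -> : ((k : nat) == c) = false by [].
apply/negbTE; apply/eqP => e; move: (ltn_ord k); rewrite e; lia.
Qed.


Lemma sum_delta (Bd a0 : nat) (F : nat -> R) : (a0 < Bd)%N ->
  \sum_(a < Bd) (((a : nat) == a0)%:R * F a) = F a0.
Proof.
move=> h; rewrite (bigD1 (Ordinal h)) //= eqxx mul1r big1 ?addr0 // => k hk.
suff -> : ((k : nat) == a0) = false by rewrite mul0r.
by apply/negbTE; apply: contra hk => /eqP e; apply/eqP/val_inj.
Qed.

Lemma pickle_inv_eq (k : nat) (x : nat * nat) :
  (pickle_inv k == Some x) = (k == pickle x).
Proof.
apply/eqP/eqP => [e|->]; last exact: pickleK_inv.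
by have := @pickle_invK (nat * nat)%type k; rewrite e /=.
Qed.

Lemma null_countable (N : nat -> 'M[R]_n -> Prop) :
  (forall a, sym_null (N a)) -> sym_null (fun C => exists a, N a C).
Proof.
move=> HN eps eps0.
have : forall a, exists x : (nat -> bool) * (nat -> 'M[R]_n) * (nat -> 'M[R]_n),
    (forall k (i j : 'I_n), (i <= j)%N -> x.1.2 k i j <= x.2 k i j) /\
    (forall C : 'M[R]_n, symm C -> N a C ->
       exists2 k, x.1.1 k & forall i j : 'I_n, (i <= j)%N -> x.1.2 k i j <= C i j <= x.2 k i j) /\
    (forall K : nat, \sum_(k < K | x.1.1 k) vol (x.1.2 k) (x.2 k) <= eps / 2%:R ^+ a.+1).
  move=> a.
  have e0 : 0 < eps / 2%:R ^+ a.+1 by rewrite divr_gt0 // exprn_gt0.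
  have [u [lo [hi [H1 [H2 H3]]]]] := HN a _ e0.
  by exists (u, lo, hi).
move=> /choice_nat [g Hg].
pose u a := (g a).1.1; pose lo a := (g a).1.2; pose hi a := (g a).2.
pose used k := if @pickle_inv (nat * nat)%type k is Some (a, j) then u a j else false.
pose lo' k := if @pickle_inv (nat * nat)%type k is Some (a, j) then lo a j else 0.
pose hi' k := if @pickle_inv (nat * nat)%type k is Some (a, j) then hi a j else 0.
exists used, lo', hi'; split.
  move=> k i j hij; rewrite /lo' /hi'; case: pickle_inv => [[a j']|] //.
  by have [H1 _] := Hg a; apply: H1.
split.
  move=> C sC [a NC]; have [_ [H2 _]] := Hg a; have [j uj Hj] := H2 C sC NC.
  exists (pickle (a, j)); first by rewrite /used pickleK_inv.
  by rewrite /lo' /hi' pickleK_inv.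
move=> K.
pose w a j := if u a j then vol (lo a j) (hi a j) else 0.
have w0 : forall a j, 0 <= w a j.
  move=> a j; rewrite /w; case: (u a j) => //; apply: vol_ge0.
  by have [H1 _] := Hg a; apply: H1.
pose W k := if @pickle_inv (nat * nat)%type k is Some (a, j) then w a j else 0.
have -> : \sum_(k < K | used k) \prod_(ij : 'I_n * 'I_n | (ij.1 <= ij.2)%N)
          (hi' k ij.1 ij.2 - lo' k ij.1 ij.2) = \sum_(k < K) W k.
  rewrite big_mkcond; apply: eq_bigr => k _ /=.
  rewrite /used /W /hi' /lo'; case: pickle_inv => [[a j]|] /=; last by [].
  by rewrite /w; case: (u a j).
pose Bd := (\max_(k < K) (if @pickle_inv (nat * nat)%type k is Some (a, j) then maxn a j else 0%N)).+1.
have HW : forall k : 'I_K, W k = \sum_(a < Bd) \sum_(j < Bd)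
     ((@pickle_inv (nat * nat)%type k == Some ((a : nat), (j : nat)))%:R * w a j).
  move=> k; rewrite /W.
  have := leq_bigmax (F := fun k : 'I_K => if @pickle_inv (nat * nat)%type k is Some (a, j) then maxn a j else 0%N) k.
  case: pickle_inv => [[a0 j0]|] /= hb.
    have ha : (a0 < Bd)%N by rewrite ltnS (leq_trans (leq_maxl a0 j0)).
    have hj : (j0 < Bd)%N by rewrite ltnS (leq_trans (leq_maxr a0 j0)).
    rewrite -(sum_delta (fun a => w a j0) ha); apply: eq_bigr => a _.
    rewrite -(sum_delta (fun j => w a j) hj) mulr_sumr; apply: eq_bigr => j _.
    by rewrite mulrA -natrM -[Some _ == _]/((a0, j0) == (a : nat, j : nat)) xpair_eqE mulnb [a0 == _]eq_sym [j0 == _]eq_sym.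
  by rewrite big1 // => a _; rewrite big1 // => j _; rewrite mul0r.
rewrite (eq_bigr _ (fun k _ => HW k)) exchange_big /=.
apply: (@le_trans _ _ (\sum_(a < Bd) eps / 2%:R ^+ a.+1)); last first.
  rewrite geom_sum lerBlDr lerDl; apply: divr_ge0; [exact: ltW | exact: exprn_ge0].
apply: ler_sum => a _; rewrite exchange_big /=.
apply: (@le_trans _ _ (\sum_(j < Bd) w a j)).
  apply: ler_sum => j _.
  rewrite -mulr_suml mulrC; rewrite -[X in _ <= X]mulr1; apply: ler_wpM2l => //.
  under eq_bigr => k _ do rewrite pickle_inv_eq.
  exact: sum_indic_le1.
have [_ [_ H3]] := Hg a; apply: le_trans (H3 Bd).
rewrite [X in _ <= X]big_mkcond /=; apply: ler_sum => j _; rewrite /w.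
by [].
Qed.


Lemma null_finite (T : finType) (N : T -> 'M[R]_n -> Prop) :
  (forall t, sym_null (N t)) -> sym_null (fun C => exists t, N t C).
Proof.
move=> HN.
pose N' a C := exists t, (enum_rank t : nat) = a /\ N t C.
apply: (@null_sub (fun C => exists t, N t C) (fun C => exists a, N' a C)).
  by move=> C _ [t Nt]; exists (enum_rank t : nat), t.
apply: null_countable => a.
case: (classic (exists t : T, (enum_rank t : nat) = a)) => [[t0 e0]|ne].
  apply: (@null_sub (N' a) (N t0)) => // C _ [t [e Nt]].
  suff <- : t = t0 by [].
  by apply: enum_rank_inj; apply: val_inj; rewrite /= e e0.
by apply: (@null_empty (N' a)) => C [t [e _]]; apply: ne; exists t.
Qed.

Lemma grid_nat (m : nat) (s : R) : 0 <= s -> s <= m.+1%:R ->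
  exists j : nat, (j < m.+1)%N /\ j%:R <= s /\ s <= j.+1%:R.
Proof.
elim: m s => [|m IH] s s0 sm.
  by exists 0%N; split=> //; split=> //.
case: (lerP s m.+1%:R) => h.
  have [j [hj [h1 h2]]] := IH s s0 h; exists j; split=> //; exact: ltnW.
by exists m.+1; split=> //; split=> //; exact: ltW.
Qed.

End Null.

Section Cover.
Variables (R : realType) (n : nat).

Definition ctrv (B : R) (M : nat) (j : nat) : R := - B + (2 * j + 1)%:R * B / M%:R.

Lemma grid_pt (B : R) (m : nat) (t : R) : 0 < B -> `|t| <= B ->
  exists j : 'I_m.+1, `|t - ctrv B m.+1 j| <= B / m.+1%:R.
Proof.
move=> B0 tB.
have M0 : 0 < m.+1%:R :> R by rewrite ltr0n.
pose s := (t + B) * m.+1%:R / (2 * B).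
have [s0 s1] : 0 <= s /\ s <= m.+1%:R.
  move: tB; rewrite ler_norml => /andP [h1 h2]; rewrite /s; split.
    by apply: divr_ge0; [apply: mulr_ge0; lra | lra].
  rewrite ler_pdivrMr; last lra.
  have : t + B <= 2 * B by lra.
  move=> h; rewrite mulrC; apply: ler_wpM2l; first exact: ltW. lra.
have [j [hj [h1 h2]]] := grid_nat s0 s1.
exists (Ordinal hj).
have -> : t - ctrv B m.+1 (Ordinal hj) = (2 * s - 2 * j%:R - 1) * (B / m.+1%:R).
  rewrite /ctrv /= /s natrD natrM mulr1n; field.
  apply/andP; split; apply/lt0r_neq0; lra.
rewrite normrM (ger0_norm (_ : 0 <= B / m.+1%:R)); last by apply: divr_ge0; lra.
rewrite -[X in _ <= X]mul1r; apply: ler_wpM2r; first by apply: divr_ge0; lra.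
move: h2; rewrite -natr1 => h2.
rewrite ler_norml; apply/andP; split; lra.
Qed.

Lemma ctrv_bound (B : R) (m : nat) (j : 'I_m.+1) : 0 < B -> `|ctrv B m.+1 j| <= B.
Proof.
move=> B0; rewrite /ctrv.
have M0 : 0 < m.+1%:R :> R by rewrite ltr0n.
have hj : (j : nat).+1%:R <= m.+1%:R :> R by rewrite ler_nat.
rewrite natrD natrM mulr1n.
have e : - B + (2%:R * j%:R + 1) * B / m.+1%:R = B * ((2 * j%:R + 1) / m.+1%:R - 1).
  by field; rewrite addrC natr1 pnatr_eq0.
rewrite e normrM (gtr0_norm B0) -[X in _ <= X]mulr1; apply: ler_wpM2l; first lra.
have j0 : 0 <= (j : nat)%:R :> R := ler0n _ _.
have q0 : 0 <= (2 * j%:R + 1) / m.+1%:R :> R by apply: divr_ge0; lra.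
have q1 : (2 * j%:R + 1) / m.+1%:R <= 2 :> R.
  have hj' : (j : nat)%:R + 1 <= m.+1%:R :> R by rewrite natr1 ler_nat.
  rewrite ler_pdivrMr //; lra.
move: q0 q1; set q := (2 * _ + 1) / _ => q0 q1. rewrite ler_norml; apply/andP; split; lra.
Qed.


Lemma sum_const_le (KK c : nat) (v : R) : 0 <= v ->
  \sum_(k < KK | (k < c)%N) v <= v *+ c.
Proof.
move=> v0; case: (leqP KK c) => h.
  rewrite (big_ord_widen_cond c (fun k => (k < c)%N) (fun _ => v) h).
  apply: (@le_trans _ _ (\sum_(k < c) v)).
    by rewrite [X in _ <= X](bigID (fun k : 'I_c => (k < c)%N && (k < KK)%N)) /= lerDl sumr_ge0.
  by rewrite sumr_const card_ord.
rewrite -(big_ord_widen_cond KK (fun _ => true) (fun _ => v) (ltnW h)).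
by rewrite sumr_const card_ord.
Qed.

Lemma null_lip_box (I : finType) (f : (I -> R) -> 'M[R]_n) (B L : R) :
  (#|I| < #|[pred ij : 'I_n * 'I_n | (ij.1 <= ij.2)%N]|)%N -> 0 < B -> 0 <= L ->
  (forall x y : I -> R, (forall k, `|x k| <= B) -> (forall k, `|y k| <= B) ->
     forall i j, `|f x i j - f y i j| <= L * \sum_k `|x k - y k|) ->
  sym_null (fun C => exists2 x : I -> R, (forall k, `|x k| <= B) & C = f x).
Proof.
move=> hcard B0 L0 Hf eps eps0.
set D := #|[pred ij : 'I_n * 'I_n | (ij.1 <= ij.2)%N]| in hcard *.
set K := #|I| in hcard *.
pose a := 2 * (L * (K%:R * B)).
have a0 : 0 <= a by rewrite /a; apply: mulr_ge0 => //; apply: mulr_ge0 => //; apply: mulr_ge0; [exact: ler0n | exact: ltW].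
have q0 : 0 <= a ^+ D / eps by apply: divr_ge0; [exact: exprn_ge0 | exact: ltW].
pose m := Num.Def.archi_bound (a ^+ D / eps).
have hm : a ^+ D / eps < m%:R := archi_boundP q0.
pose M := m.+1.
have M0 : 0 < M%:R :> R by rewrite ltr0n.
pose T := {ffun I -> 'I_M}.
pose c0 : T := [ffun _ => ord0].
pose ctr (c : T) : I -> R := fun k => ctrv B M (c k).
pose dl := L * (K%:R * (B / M%:R)).
have dl0 : 0 <= dl by apply: mulr_ge0 => //; apply: mulr_ge0; [rewrite ler0n | apply: divr_ge0; lra].
pose cs k := nth c0 (enum T) k.
exists (fun k => (k < #|T|)%N), (fun k => \matrix_(i, j) (f (ctr (cs k)) i j - dl)),
  (fun k => \matrix_(i, j) (f (ctr (cs k)) i j + dl)).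
split; first by move=> k i j _; rewrite !mxE; lra.
split.
  move=> C _ [x xB ->].
  pose c : T := [ffun k => odflt ord0 [pick j : 'I_M | `|x k - ctrv B M j| <= B / M%:R]].
  have hc : forall k, `|x k - ctr c k| <= B / M%:R.
    move=> k; rewrite /ctr ffunE; case: pickP => [j hj|hn] //=.
    by have [j hj] := grid_pt m B0 (xB k); move: (hn j); rewrite hj.
  have cB : forall k, `|ctr c k| <= B by move=> k; apply: ctrv_bound.
  exists (index c (enum T)); first by rewrite cardE index_mem mem_enum.
  move=> i j _; rewrite !mxE /cs nth_index ?mem_enum //.
  have h1 := Hf x (ctr c) xB cB i j.
  have h2 : \sum_k `|x k - ctr c k| <= K%:R * (B / M%:R).
    apply: (@le_trans _ _ (\sum_(k : I) (B / M%:R))); first by apply: ler_sum => k _; exact: hc.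
    by rewrite sumr_const mulr_natl.
  have h3 : `|f x i j - f (ctr c) i j| <= dl.
    by apply: le_trans h1 _; rewrite /dl; apply: ler_wpM2l.
  move: h3; rewrite ler_norml => /andP [h4 h5]; apply/andP; split; lra.
move=> KK.
have ev : forall k, \prod_(ij : 'I_n * 'I_n | (ij.1 <= ij.2)%N)
     ((\matrix_(i, j) (f (ctr (cs k)) i j + dl)) ij.1 ij.2 - (\matrix_(i, j) (f (ctr (cs k)) i j - dl)) ij.1 ij.2)
     = (2 * dl) ^+ D.
  move=> k; rewrite -prodr_const; apply: eq_bigr => ij _; rewrite !mxE; lra.
under eq_bigr => k _ do rewrite ev.
apply: le_trans (sum_const_le _ _ _) _; first by apply: exprn_ge0; lra.
rewrite card_ffun card_ord -/K.
have e2 : 2 * dl = a / M%:R by rewrite /dl /a; field; apply/lt0r_neq0.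
rewrite e2.
have [e he] : exists e, D = (K + 1 + e)%N by exists (D - K.+1)%N; lia.
rewrite he exprMn (_ : forall y : R, y *+ (M ^ K) = y * (M%:R ^+ K)); last by move=> y; rewrite -natrX mulr_natr.
have hMe : (M%:R^-1) ^+ e <= 1 :> R.
  apply: exprn_ile1; first by rewrite invr_ge0 ltW.
  by rewrite invf_le1 // ler1n.
have hMK : (M%:R^-1) ^+ K * M%:R ^+ K = 1 :> R.
  by rewrite -exprMn mulVf ?expr1n // lt0r_neq0.
have ha : a ^+ (K + 1 + e) / M%:R < eps.
  rewrite ltr_pdivrMr // mulrC -ltr_pdivrMr //.
  rewrite -he; apply: lt_trans hm _; rewrite ltr_nat /M; lia.
have EW : M%:R^-1 ^+ (K + 1 + e) * M%:R ^+ K = M%:R^-1 * M%:R^-1 ^+ e :> R.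
  by rewrite !exprD expr1 mulrAC [_ / _ * _]mulrAC hMK mul1r.

rewrite -mulrA EW; apply: le_trans (ltW ha).
rewrite ler_wpM2l ?exprn_ge0 //.
rewrite -[X in _ <= X]mulr1 ler_wpM2l //.
by rewrite invr_ge0 ltW.
Qed.

End Cover.

Section Lip.
Variables (R : realType) (I : finType).

Definition distx (x y : I -> R) := \sum_k `|x k - y k|.
Definition inbox (B : R) (x : I -> R) := forall k, `|x k| <= B.

Definition LLipM a b (f : (I -> R) -> 'M[R]_(a, b)) :=
  forall B : R, exists L M : R, 0 <= L /\ 0 <= M /\
    forall x y, inbox B x -> inbox B y -> forall i j,
      `|f x i j| <= M /\ `|f x i j - f y i j| <= L * distx x y.

Lemma distx_ge0 x y : 0 <= distx x y.
Proof. by apply: sumr_ge0 => k _. Qed.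

Lemma coord_le_dist x y k : `|x k - y k| <= distx x y.
Proof.
rewrite /distx (bigD1 k) //= lerDl; exact: sumr_ge0.
Qed.

Lemma LLipM_const a b (c : 'M[R]_(a, b)) : LLipM (fun _ => c).
Proof.
move=> B; exists 0, (\sum_i \sum_j `|c i j|); split=> //; split.
  by apply: sumr_ge0 => i _; apply: sumr_ge0.
move=> x y _ _ i j; split; last by rewrite subrr normr0 mul0r.
rewrite (bigD1 i) //= (bigD1 j) //= -addrA lerDl.
apply: addr_ge0; first by apply: sumr_ge0.
by apply: sumr_ge0 => i' _; apply: sumr_ge0.
Qed.

Lemma LLipM_coord a b (e : (I -> R) -> 'I_a -> 'I_b -> R) :
  (forall i j, (forall x, e x i j = 0) \/ exists k, forall x, e x i j = x k) ->
  LLipM (fun x => \matrix_(i, j) e x i j).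
Proof.
move=> He B; exists 1, `|B|; split=> //; split=> //.
move=> x y bx _ i j; rewrite !mxE; case: (He i j) => [h|[k h]].
  by rewrite !h subrr !normr0 mul1r distx_ge0.
rewrite !h mul1r; split; last exact: coord_le_dist.
exact: le_trans (bx k) (ler_norm B).
Qed.

Lemma LLipM_add a b (f g : (I -> R) -> 'M[R]_(a, b)) :
  LLipM f -> LLipM g -> LLipM (fun x => f x + g x).
Proof.
move=> Hf Hg B; have [L1 [M1 [L10 [M10 H1]]]] := Hf B; have [L2 [M2 [L20 [M20 H2]]]] := Hg B.
exists (L1 + L2), (M1 + M2); split; first exact: addr_ge0.
split; first exact: addr_ge0.
move=> x y bx hy i j; have [h1 h1'] := H1 x y bx hy i j; have [h2 h2'] := H2 x y bx hy i j.
rewrite !mxE; split; first by apply: le_trans (ler_normD _ _) _; exact: lerD.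
have -> : f x i j + g x i j - (f y i j + g y i j) = (f x i j - f y i j) + (g x i j - g y i j) by ring.
by apply: le_trans (ler_normD _ _) _; rewrite mulrDl; exact: lerD.
Qed.

Lemma LLipM_opp a b (f : (I -> R) -> 'M[R]_(a, b)) :
  LLipM f -> LLipM (fun x => - f x).
Proof.
move=> Hf B; have [L1 [M1 [L10 [M10 H1]]]] := Hf B.
exists L1, M1; split=> //; split=> //.
move=> x y bx hy i j; have [h1 h1'] := H1 x y bx hy i j.
rewrite !mxE normrN; split=> //.
by rewrite -opprD normrN.
Qed.

Lemma LLipM_sub a b (f g : (I -> R) -> 'M[R]_(a, b)) :
  LLipM f -> LLipM g -> LLipM (fun x => f x - g x).
Proof. by move=> Hf Hg; apply: LLipM_add => //; exact: LLipM_opp. Qed.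

Lemma LLipM_reindex a b c d (f : (I -> R) -> 'M[R]_(a, b)) (g : (I -> R) -> 'M[R]_(c, d))
  (phi : 'I_c -> 'I_d -> 'I_a) (psi : 'I_c -> 'I_d -> 'I_b) :
  LLipM f -> (forall x i j, g x i j = f x (phi i j) (psi i j)) -> LLipM g.
Proof.
move=> Hf Hg B; have [L1 [M1 [L10 [M10 H1]]]] := Hf B.
exists L1, M1; split=> //; split=> //.
by move=> x y bx hy i j; rewrite !Hg; apply: H1.
Qed.

Lemma LLipM_tr a b (f : (I -> R) -> 'M[R]_(a, b)) : LLipM f -> LLipM (fun x => (f x)^T).
Proof.
move=> Hf; apply: (LLipM_reindex (phi := fun i j => j) (psi := fun i j => i) Hf).
by move=> x i j; rewrite mxE.
Qed.

Lemma LLipM_mul a b c (f : (I -> R) -> 'M[R]_(a, b)) (g : (I -> R) -> 'M[R]_(b, c)) :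
  LLipM f -> LLipM g -> LLipM (fun x => f x *m g x).
Proof.
move=> Hf Hg B; have [L1 [M1 [L10 [M10 H1]]]] := Hf B; have [L2 [M2 [L20 [M20 H2]]]] := Hg B.
exists (b%:R * (M1 * L2 + M2 * L1)), (b%:R * (M1 * M2)).
split; first by apply: mulr_ge0; [exact: ler0n | apply: addr_ge0; exact: mulr_ge0].
split; first by apply: mulr_ge0; [exact: ler0n | exact: mulr_ge0].
move=> x y bx hy i j; rewrite !mxE; split.
  apply: le_trans (ler_norm_sum _ _ _) _.
  apply: (@le_trans _ _ (\sum_(k < b) (M1 * M2))); last by rewrite sumr_const card_ord mulr_natl.
  apply: ler_sum => k _; rewrite normrM.
  have [h1 _] := H1 x y bx hy i k; have [h2 _] := H2 x y bx hy k j.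
  by apply: ler_pM.
rewrite -sumrB; apply: le_trans (ler_norm_sum _ _ _) _.
apply: (@le_trans _ _ (\sum_(k < b) ((M1 * L2 + M2 * L1) * distx x y))); last first.
  by rewrite sumr_const card_ord -mulrnAl mulr_natl.
apply: ler_sum => k _.
have [h1 h1'] := H1 x y bx hy i k; have [h2 h2'] := H2 x y bx hy k j.
have [h3 _] := H2 y x hy bx k j.
have -> : f x i k * g x k j - f y i k * g y k j
   = f x i k * (g x k j - g y k j) + g y k j * (f x i k - f y i k) by ring.
apply: le_trans (ler_normD _ _) _; rewrite !normrM mulrDl -!mulrA.
by apply: lerD; apply: ler_pM.
Qed.


Lemma null_image n (f : (I -> R) -> 'M[R]_n) :
  (#|I| < #|[pred ij : 'I_n * 'I_n | (ij.1 <= ij.2)%N]|)%N -> LLipM f ->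
  sym_null (fun C => exists x, C = f x).
Proof.
move=> hc Hf.
pose N t C := exists2 x : I -> R, (forall k, `|x k| <= t.+1%:R) & C = f x.
apply: (@null_sub _ _ _ (fun C => exists t : nat, N t C)).
  move=> C _ [x ->].
  have s0 : 0 <= \sum_k `|x k| by apply: sumr_ge0.
  exists (Num.Def.archi_bound (\sum_k `|x k|)), x => // k.
  apply: (le_trans (y := \sum_k `|x k|)).
    by rewrite (bigD1 k) //= lerDl; apply: sumr_ge0.
  apply: ltW; apply: lt_trans (archi_boundP s0) _; rewrite ltr_nat; lia.
apply: null_countable => t.
have [L [M [L0 [_ H]]]] := Hf t.+1%:R.
apply: (null_lip_box hc _ L0) => //.
by move=> x y bx hy i j; have [_ ->] := H x y bx hy i j.
Qed.

End Lip.

Local Close Scope ring_scope.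

Lemma tauS k : tau k.+1 = (tau k + k.+1)%N.
Proof. by rewrite /tau binS bin1. Qed.

Lemma tau2 k : (tau k * 2 = k.+1 * k)%N.
Proof. elim: k => [|k IH]; first by []. rewrite tauS; nia. Qed.

Lemma tau_split p q : tau (p + q) = (tau p + tau q + p * q)%N.
Proof.
have h1 := tau2 (p + q); have h2 := tau2 p; have h3 := tau2 q. nia.
Qed.

Lemma card_upper (n : nat) (S : {set 'I_n}) :
  #|[set ij : 'I_n * 'I_n | (ij.1 \in S) && (ij.2 \in S) && (ij.1 <= ij.2)%N]| = tau #|S|.
Proof.
set A := [set ij : 'I_n * 'I_n | _].
pose B := [set ij : 'I_n * 'I_n | (ij.1 \in S) && (ij.2 \in S) && (ij.2 <= ij.1)%N].
have hB : #|B| = #|A|.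
  have -> : B = [set (ij.2, ij.1) | ij in A].
    apply/setP => -[i j]; rewrite inE /=; apply/idP/imsetP => [h|[[i' j'] h [-> ->]]].
      exists (j, i) => //; rewrite inE /=; move: h => /andP [/andP [h1 h2] h3].
      by rewrite h1 h2 h3.
    by move: h; rewrite inE /= => /andP [/andP [h1 h2] h3]; rewrite h1 h2 h3.
  by rewrite card_imset // => -[a b] [c d] /= [-> ->].
have hU : A :|: B = setX S S.
  apply/setP => -[i j]; rewrite !inE /=.
  by case: (i \in S); case: (j \in S) => //=; apply: leq_total.
have hI : #|A :&: B| = #|S|.
  have -> : A :&: B = [set (i, i) | i in S].
    apply/setP => -[i j]; rewrite !inE /=; apply/idP/imsetP => [h|[i' h [-> ->]]].
      move: h => /andP [/andP [/andP [h1 h2] h3] /andP [_ h4]].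
      have e : i = j by apply: val_inj; apply/eqP; rewrite eqn_leq h3 h4.
      by subst j; exists i.
    by rewrite h leqnn.
  by rewrite card_imset // => a b [].
have h2 : (#|S| * #|S| + #|S| = #|A| + #|A|)%N.
  by have := cardsUI A B; rewrite hU cardsX hI hB.
have h1 := tau2 #|S|.
move: h1 h2; generalize #|S| #|A| => s a; nia.
Qed.

Local Open Scope ring_scope.

Section Rep.
Variables (R : realType) (n p : nat).

Lemma rep_lemma (F Z : 'M[R]_(n, p)) (P S : 'M[R]_n) :
  F^T *m Z = 1%:M -> F *m F^T + P = 1%:M -> P^T = P -> P *m P = P -> P *m F = 0 ->
  S^T = S -> S *m Z = 0 ->
  S = (P - F *m Z^T *m P) *m (P *m S *m P) *m (P - F *m Z^T *m P)^T.
Proof.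
move=> hFZ hFP hPt hPP hPF hSt hSZ.
set T := P - F *m Z^T *m P.
have hZ : Z = F + P *m Z.
  by rewrite -{1}[Z]mul1mx -hFP mulmxDl -mulmxA hFZ mulmx1.
have hSF : S *m F = - (S *m P *m Z).
  apply/eqP; rewrite -addr_eq0; apply/eqP.
  by rewrite -mulmxA -mulmxDr -hZ.
have hTt : T^T = P - P *m Z *m F^T.
  by rewrite /T linearB /= !trmx_mul hPt trmxK mulmxA.
have h1 : S = S *m P *m T^T.
  rewrite hTt mulmxBr !mulmxA -[S *m P *m P]mulmxA hPP.
  rewrite -{1}[S]mulmx1 -hFP mulmxDr mulmxA hSF.
  by rewrite mulNmx addrC.
have h2 : S = T *m P *m S.
  by rewrite -{1}hSt {1}h1 !trmx_mul trmxK hPt hSt mulmxA.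
by rewrite {1}h2 {1}h1 !mulmxA.
Qed.

End Rep.

Section Chart.
Variables (R : realType) (n p : nat) (f : 'I_p -> 'I_n).

Definition imf : {set 'I_n} := [set f j | j : 'I_p].
Definition pv : 'rV[R]_n := \row_i (i \notin imf)%:R.
Definition Pm : 'M[R]_n := diag_mx pv.
Definition Fm : 'M[R]_(n, p) := \matrix_(i, j) (i == f j)%:R.

Lemma Pm_tr : Pm^T = Pm.
Proof. exact: tr_diag_mx. Qed.

Lemma PmA k (A : 'M[R]_(n, k)) : Pm *m A = \matrix_(i, j) ((i \notin imf)%:R * A i j).
Proof. by rewrite /Pm mul_diag_mx; apply/matrixP => i j; rewrite !mxE. Qed.

Lemma Pm_idem : Pm *m Pm = Pm.
Proof.
rewrite PmA; apply/matrixP => i j; rewrite !mxE.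
by case: (i \in imf); case: (i == j); rewrite /= ?mul0r ?mul1r ?mulr0n ?mulr1n.
Qed.

Lemma Pm_F : Pm *m Fm = 0.
Proof.
rewrite PmA; apply/matrixP => i j; rewrite !mxE.
case: eqP => [->|_]; last by rewrite mulr0.
by rewrite imset_f // mul0r.
Qed.

Lemma FtA k (A : 'M[R]_(n, k)) : Fm^T *m A = \matrix_(j, l) A (f j) l.
Proof.
apply/matrixP => j l; rewrite !mxE (bigD1 (f j)) //= !mxE eqxx mul1r big1 ?addr0 //.
by move=> i hi; rewrite !mxE (negbTE hi) mul0r.
Qed.

Hypothesis finj : injective f.

Lemma FtF : Fm^T *m Fm = 1%:M.
Proof.
rewrite FtA; apply/matrixP => j l; rewrite !mxE (inj_eq finj) //.
Qed.

Lemma FFP : Fm *m Fm^T + Pm = 1%:M.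
Proof.
apply/matrixP => i k; rewrite !mxE.
case: (boolP (i \in imf)) => hi.
  have /imsetP [j0 _ e] := hi; subst i.
  rewrite (bigD1 j0) //= !mxE eqxx mul1r big1; last first.
    by move=> j hj; rewrite !mxE (inj_eq finj) eq_sym (negbTE hj) mul0r.
  by rewrite addr0 mul0rn addr0 eq_sym.
rewrite big1; last first.
  move=> j _; rewrite !mxE; case: eqP => [e|_]; last by rewrite mul0r.
  by move: hi; rewrite e imset_f.
by rewrite add0r /=.
Qed.


Variable r : nat.

Definition PT1 := {x : 'I_n * 'I_p | x.1 \notin imf}.
Definition PT2 := {x : 'I_n * 'I_n | (x.1 \notin imf) && (x.2 \notin imf) && (x.1 <= x.2)%N}.
Definition PT := (PT1 + PT2 + 'I_r)%type.

Definition ordpair (i j : 'I_n) : 'I_n * 'I_n := if (i <= j)%N then (i, j) else (j, i).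

Definition Hm (x : PT -> R) : 'M[R]_(n, p) :=
  \matrix_(i, j) (if (insub (i, j) : option PT1) is Some d then x (inl (inl d)) else 0).
Definition Sm (x : PT -> R) : 'M[R]_n :=
  \matrix_(i, j) (if (insub (ordpair i j) : option PT2) is Some d then x (inl (inr d)) else 0).
Definition muv (x : PT -> R) : 'rV[R]_r := \row_k x (inr k).
Definition Tm (x : PT -> R) : 'M[R]_n := Pm - Fm *m (Hm x)^T *m Pm.
Definition Phi (RB : 'M[R]_(r, n * n)) (x : PT -> R) : 'M[R]_n :=
  Tm x *m Sm x *m (Tm x)^T + vec_mx (muv x *m RB).

Lemma Phi_LLip RB : LLipM (Phi RB).
Proof.
have hH : LLipM Hm.
  apply: LLipM_coord => i j; case: (insub (i, j) : option PT1) => [d|]; last by left.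
  by right; exists (inl (inl d)).
have hS : LLipM Sm.
  apply: LLipM_coord => i j; case: (insub (ordpair i j) : option PT2) => [d|]; last by left.
  by right; exists (inl (inr d)).
have hmu : LLipM muv.
  apply: (@LLipM_reindex _ _ _ _ _ _ (fun x => \matrix_(i, j) x (inr j)) muv (fun i j => i) (fun i j => j)).
    by apply: LLipM_coord => i j; right; exists (inr j).
  by move=> x i j; rewrite !mxE.
have hT : LLipM Tm.
  apply: LLipM_sub; first exact: LLipM_const.
  apply: LLipM_mul; last exact: LLipM_const.
  by apply: LLipM_mul; [exact: LLipM_const | exact: LLipM_tr].
apply: LLipM_add.
  by apply: LLipM_mul; [apply: LLipM_mul | apply: LLipM_tr].
apply: (@LLipM_reindex _ _ _ _ _ _ (fun x => muv x *m RB) _ (fun i j => 0) (fun i j => mxvec_index i j)).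
  by apply: LLipM_mul => //; exact: LLipM_const.
by move=> x i j; rewrite mxE.
Qed.


Lemma PT_card : (r < tau p)%N ->
  (#|{: PT}| < #|[pred ij : 'I_n * 'I_n | (ij.1 <= ij.2)%N]|)%N.
Proof.
move=> hr.
have himf : #|imf| = p by rewrite card_imset // card_ord.
have hC := cardsC imf; rewrite card_ord himf in hC.
have hc : #|~: imf| = (n - p)%N by lia.
rewrite /PT !card_sum !card_sig card_ord.
have e1 : #|[pred x : 'I_n * 'I_p | x.1 \notin imf]| = ((n - p) * p)%N.
  have -> : #|[pred x : 'I_n * 'I_p | x.1 \notin imf]| = #|setX (~: imf) [set: 'I_p]|.
    by apply: eq_card => x; rewrite !inE andbT.
  by rewrite cardsX cardsT card_ord hc.
have e2 : #|[pred x : 'I_n * 'I_n | (x.1 \notin imf) && (x.2 \notin imf) && (x.1 <= x.2)%N]|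
    = tau (n - p).
  by rewrite -hc -card_upper; apply: eq_card => x; rewrite !inE.
have e3 : #|[pred ij : 'I_n * 'I_n | (ij.1 <= ij.2)%N]| = tau n.
  have := card_upper [set: 'I_n]; rewrite cardsT card_ord => <-.
  by apply: eq_card => x; rewrite !inE.
rewrite e1 e2 e3.
have ht := tau_split p (n - p).
move: ht hr; rewrite (_ : p + (n - p) = n)%N; last by lia.
generalize (tau n) (tau p) (tau (n - p)) => a b c; nia.
Qed.


Lemma Phi_rep (RB : 'M[R]_(r, n * n)) (Z : 'M[R]_(n, p)) (S : 'M[R]_n) (mu0 : 'rV[R]_r) :
  Fm^T *m Z = 1%:M -> S^T = S -> S *m Z = 0 ->
  exists x : PT -> R, Phi RB x = S + vec_mx (mu0 *m RB).
Proof.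
move=> hFZ hS hSZ.
pose x (y : PT) : R := match y with
  | inl (inl d) => Z (val d).1 (val d).2
  | inl (inr d) => S (val d).1 (val d).2
  | inr k => mu0 0 k end.
exists x.
have eH : Hm x = Pm *m Z.
  rewrite PmA; apply/matrixP => i j; rewrite !mxE.
  case: insubP => [d hd ed|hd] /=.
    by rewrite ed /=; move: hd => /= ->; rewrite mul1r.
  by move: hd => /= /negPn ->; rewrite mul0r.
have eS : Sm x = Pm *m S *m Pm.
  apply/matrixP => i j; rewrite /Pm mul_mx_diag mul_diag_mx !mxE.
  have hSji : S j i = S i j by rewrite -{1}hS mxE.
  rewrite /ordpair; case: leqP => hij.
    case: insubP => [d hd ed|hd] /=.
      by rewrite ed /=; move: hd => /= /andP [/andP [-> ->] _]; rewrite mul1r mulr1.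
    move: hd => /=; rewrite hij andbT negb_and !negbK => /orP [] ->.
      by rewrite !mul0r.
    by rewrite mulr0.
  case: insubP => [d hd ed|hd] /=.
    by rewrite ed /=; move: hd => /= /andP [/andP [-> ->] _]; rewrite mul1r mulr1 hSji.
  move: hd => /=; rewrite (ltnW hij) andbT negb_and !negbK => /orP [] ->.
    by rewrite mulr0.
  by rewrite !mul0r.
have emu : muv x = mu0 by apply/rowP => k; rewrite !mxE.
rewrite /Phi /Tm eH eS emu.
have eT : Pm - Fm *m (Pm *m Z)^T *m Pm = Pm - Fm *m Z^T *m Pm.
  by rewrite trmx_mul Pm_tr -!mulmxA Pm_idem !mulmxA.
rewrite eT -(rep_lemma hFZ FFP Pm_tr Pm_idem Pm_F hS hSZ).
by [].
Qed.

End Chart.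

Section Psd.
Variables (R : realType) (n : nat).

Definition bf (M : 'M[R]_n) (u w : 'cV[R]_n) : R := (u^T *m M *m w) 0 0.
Definition qf (M : 'M[R]_n) (u : 'cV[R]_n) : R := bf M u u.

Lemma bf_sym M u w : M^T = M -> bf M u w = bf M w u.
Proof.
move=> hM; rewrite /bf.
have h : forall A : 'M[R]_1, A 0 0 = A^T 0 0 by move=> A; rewrite mxE.
by rewrite [LHS]h !trmx_mul trmxK hM mulmxA.
Qed.

Lemma bfDl M u v w : bf M (u + v) w = bf M u w + bf M v w.
Proof. by rewrite /bf linearD /= !mulmxDl mxE. Qed.

Lemma bfDr M u v w : bf M w (u + v) = bf M w u + bf M w v.
Proof. by rewrite /bf mulmxDr mxE. Qed.

Lemma bfZl M t u w : bf M (t *: u) w = t * bf M u w.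
Proof. by rewrite /bf linearZ /= -!scalemxAl mxE. Qed.

Lemma bfZr M t u w : bf M w (t *: u) = t * bf M w u.
Proof. by rewrite /bf -scalemxAr mxE. Qed.

Lemma qf_add M u w t : M^T = M ->
  qf M (u + t *: w) = qf M u + 2 * t * bf M u w + t ^+ 2 * qf M w.
Proof.
move=> hM; rewrite /qf bfDl !bfDr !bfZl !bfZr (bf_sym w u hM); ring.
Qed.

Definition ev (c : 'I_n) : 'cV[R]_n := delta_mx c 0.

Lemma bf_ev M c v : bf M (ev c) v = \sum_j M c j * v j 0.
Proof.
rewrite /bf /ev trmx_delta -rowE !mxE; apply: eq_bigr => j _; by rewrite !mxE.
Qed.

Lemma qf_ev M c : qf M (ev c) = M c c.
Proof.
rewrite /qf bf_ev (bigD1 c) //= big1 ?addr0 ?mxE ?eqxx ?mulr1 //.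
by move=> j hj; rewrite !mxE (negbTE hj) mulr0.
Qed.

Lemma bf_ev_ev M c d : bf M (ev d) (ev c) = M d c.
Proof.
rewrite bf_ev (bigD1 c) //= big1 ?addr0 ?mxE ?eqxx ?mulr1 //.
by move=> j hj; rewrite !mxE (negbTE hj) mulr0.
Qed.


Lemma bf_subZ M1 M2 s u w : bf (M1 - s *: M2) u w = bf M1 u w - s * bf M2 u w.
Proof. by rewrite /bf mulmxBr mulmxBl -scalemxAr -scalemxAl !mxE. Qed.

Lemma m11E (A : 'M[R]_(1, n)) (B : 'M[R]_(n, 1)) (C : 'M[R]_(1,1)) :
  (A *m B *m C) 0 0 = (A *m B) 0 0 * C 0 0.
Proof. by rewrite mxE big_ord1. Qed.

Lemma tr_psd (S X : 'M[R]_n) : S^T = S -> (forall v, 0 <= qf S v) ->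
  X^T = X -> (forall v, 0 <= qf X v) -> 0 <= \tr (S *m X).
Proof.
move=> hS pS.
suff H : forall k (X : 'M[R]_n), X^T = X -> (forall v, 0 <= qf X v) ->
    (forall i j : 'I_n, (i < n - k)%N -> X i j = 0) -> 0 <= \tr (S *m X).
  by move=> hX pX; apply: (H n) => // i j; rewrite subnn.
elim=> [|k IH] {}X hX pX zX.
  have -> : X = 0 by apply/matrixP => i j; rewrite mxE zX // subn0.
  by rewrite mulmx0 mxtrace0.
case: (ltnP k n) => hk; last first.
  by apply: IH => // i j hi; apply: zX; lia.
have hc : (n - k.+1 < n)%N by lia.
pose c := Ordinal hc.
have Xsym : forall i j, X i j = X j i by move=> i j; rewrite -{1}hX mxE.
have a0 : 0 <= X c c by rewrite -qf_ev.
case: (eqVneq (X c c) 0) => ha.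
  have hz : forall j, X j c = 0.
    move=> j; apply/eqP; apply/negP => /negP hb.
    pose t := - (X j j + 1) / (2 * X j c).
    have := pX (ev j + t *: ev c).
    rewrite qf_add // !qf_ev ha bf_ev_ev /t.
    have -> : X j j + 2 * (- (X j j + 1) / (2 * X j c)) * X j c +
       (- (X j j + 1) / (2 * X j c)) ^+ 2 * 0 = -1.
      by field; rewrite hb.
    by rewrite lerNr oppr0 ler10.
  apply: IH => // i j hi.
  case: (ltnP i (n - k.+1)) => h; first exact: zX.
  have -> : i = c by apply: val_inj => /=; lia.
  by rewrite Xsym hz.
have apos : 0 < X c c by rewrite lt_def ha a0.
pose g := col c X.
pose X' := X - (X c c)^-1 *: (g *m g^T).
have hg : forall v, (g^T *m v) 0 0 = bf X (ev c) v.
  by move=> v; rewrite /g tr_col hX /bf /ev trmx_delta -rowE.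
have hX' : X'^T = X' by rewrite /X' linearB /= linearZ /= trmx_mul trmxK hX.
have pX' : forall v, 0 <= qf X' v.
  move=> v; have := pX (v + (- bf X (ev c) v / X c c) *: ev c).
  rewrite qf_add // qf_ev (bf_sym v (ev c) hX).
  suff -> : qf X' v = qf X v + 2 * (- bf X (ev c) v / X c c) * bf X (ev c) v +
     (- bf X (ev c) v / X c c) ^+ 2 * X c c by [].
  rewrite /qf /X' bf_subZ.
  have -> : bf (g *m g^T) v v = (bf X (ev c) v) ^+ 2.
    rewrite -hg expr2 /bf mulmxA -[_ *m g^T *m v]mulmxA m11E; congr (_ * _).
    by rewrite -[v^T *m g]trmxK trmx_mul trmxK mxE.
  by field; rewrite ha.
have zX' : forall i j : 'I_n, (i < n - k)%N -> X' i j = 0.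
  move=> i j hi; rewrite /X' !mxE big_ord1 !mxE.
  case: (ltnP i (n - k.+1)) => h.
    by rewrite (zX i j h) (zX i c h) mul0r mulr0 subr0.
  have -> : i = c by apply: val_inj => /=; lia.
  by rewrite [X j c]Xsym mulrA mulVf // mul1r subrr.
have -> : \tr (S *m X) = \tr (S *m X') + (X c c)^-1 * \tr (S *m (g *m g^T)).
  by rewrite /X' mulmxBr linearB /= -scalemxAr linearZ /= subrK.
apply: addr_ge0; first exact: IH.
apply: mulr_ge0; first by rewrite invr_ge0.
rewrite mulmxA mxtrace_mulC mulmxA trace_mx11.
exact: pS.
Qed.

End Psd.

Section Opt.
Variables (R : realType) (n m1 m2 p : nat) (A : 'I_(m1 + m2) -> 'M[R]_n) (b : 'I_(m1 + m2) -> R).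
Hypothesis Asym : forall i, symm (A i).

Lemma dotm_smat C lam X :
  dotm (Smat A C lam) X = dotm C X - \sum_i lam i * dotm (A i) X.
Proof.
rewrite /dotm.
have -> : (Smat A C lam)^T = C^T - \sum_i lam i *: (A i)^T.
  apply/matrixP => k l; rewrite !mxE !summxE; congr (_ - _).
  by apply: eq_bigr => i _; rewrite !mxE.
rewrite mulmxBl linearB /=; congr (_ - _).
rewrite mulmx_suml raddf_sum; apply: eq_bigr => i _.
change (\tr (lam i *: (A i)^T *m X) = lam i * \tr ((A i)^T *m X)).
by rewrite -scalemxAl mxtraceZ.
Qed.

Lemma smat_sym C lam : symm C -> symm (Smat A C lam).
Proof.
move=> hC; rewrite /symm; apply/matrixP => k l; rewrite /Smat !mxE !summxE.
have hA : forall i k l, A i l k = A i k l by move=> i k' l'; rewrite -[in LHS](Asym i) mxE.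
have hCkl : C l k = C k l by rewrite -[in LHS]hC mxE.
rewrite hCkl; congr (_ - _); apply: eq_bigr => i _; rewrite !mxE hA //.
Qed.

Lemma opt_of_psd C (Y : 'M[R]_(n, p)) lam : symm C ->
  first_order_mult A b C Y lam -> feasible A b (Y *m Y^T) ->
  (forall v, 0 <= qf (Smat A C lam) v) ->
  forall X, feasible A b X -> dotm C (Y *m Y^T) <= dotm C X.
Proof.
move=> hC [hpos [hcomp hSY]] [_ hfe] pS X [[hX pX] hfX].
have hS := smat_sym lam hC.
have e1 : dotm (Smat A C lam) (Y *m Y^T) = 0.
  by rewrite /dotm hS mulmxA hSY mul0mx mxtrace0.
have e2 : dotm C (Y *m Y^T) = \sum_i lam i * b i.
  move/eqP: e1; rewrite dotm_smat subr_eq0 => /eqP ->.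
  apply: eq_bigr => i _; case: (boolP (activeb A b (Y *m Y^T) i)) => h.
    by move/eqP: h => ->.
  by rewrite hcomp // !mul0r.
have e3 : dotm C X = dotm (Smat A C lam) X + \sum_i lam i * dotm (A i) X.
  by rewrite dotm_smat subrK.
rewrite e2 e3 -[X in X <= _]add0r; apply: lerD.
  by rewrite /dotm hS; apply: tr_psd.
apply: ler_sum => i _; have := hfX i; case: ifP => hi.
  by move=> ->.
move=> hb; apply: ler_wpM2l => //; apply: hpos; lia.
Qed.

Lemma kernel_row (Y : 'M[R]_(n, p)) : (\rank Y < p)%N ->
  exists v : 'rV[R]_p, v != 0 /\ v *m Y^T = 0.
Proof.
move=> hr; pose K := kermx Y^T.
have hK : K != 0.
  by rewrite -mxrank_eq0 mxrank_ker mxrank_tr; apply/eqP; lia.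
case: (pickP (fun i => row i K != 0)) => [i hi|hn].
  exists (row i K); split=> //.
  by rewrite -row_mul mulmx_ker row0.
exfalso; move/negP: hK; apply; apply/eqP/row_matrixP => i.
by move: (hn i) => /= /negbFE /eqP ->; rewrite row0.
Qed.

Lemma mul_11 (u : 'cV[R]_n) (M : 'M[R]_1) : u *m M = M 0 0 *: u.
Proof.
apply/matrixP => i j; rewrite !mxE big_ord1 (ord1 j) mulrC //.
Qed.

Lemma psd_of_twocrit C (Y : 'M[R]_(n, p)) : symm C ->
  two_critical A b C Y -> (\rank Y < p)%N ->
  exists lam, first_order_mult A b C Y lam /\ forall v, 0 <= qf (Smat A C lam) v.
Proof.
move=> hC [hf [lam [hfo H2]]] hr; exists lam; split=> // u.
have hS := smat_sym lam hC.
have [v [v0 hv]] := kernel_row hr.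
have hU : u *m v *m Y^T = 0 by rewrite -mulmxA hv mulmx0.
have H : 0 <= dotm (Smat A C lam) (u *m v *m (u *m v)^T).
  by apply: H2 => i _; rewrite hU /dotm mulmx0 mxtrace0.
pose s := (v *m v^T) 0 0.
have hs : 0 < s.
  have [k hk] : exists k, v 0 k != 0.
    apply/existsP; apply: contraR v0 => /existsPn hn.
    by apply/eqP/rowP => k; move: (hn k) => /negbNE /eqP ->; rewrite mxE.
  rewrite /s mxE (bigD1 k) //= mxE.
  have h1 : 0 < v 0 k * v 0 k by rewrite -expr2 lt_def sqrf_eq0 hk sqr_ge0.
  apply: (lt_le_trans h1); rewrite lerDl.
  by apply: sumr_ge0 => j _; rewrite mxE -expr2 sqr_ge0.
have eUU : u *m v *m (u *m v)^T = s *: (u *m u^T).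
  by rewrite trmx_mul !mulmxA -[u *m v *m v^T]mulmxA mul_11 -scalemxAl.
rewrite eUU in H.
have e : dotm (Smat A C lam) (s *: (u *m u^T)) = s * qf (Smat A C lam) u.
  by rewrite /dotm hS -scalemxAr mxtraceZ mulmxA mxtrace_mulC mulmxA trace_mx11.
by move: H; rewrite e pmulr_rge0.
Qed.


End Opt.

Unset Implicit Arguments.
Theorem theorem1 (R : realType) (n m1 m2 p : nat)
    (A : 'I_(m1 + m2) -> 'M[R]_n) (b : 'I_(m1 + m2) -> R) :
  (forall i, symm (A i)) ->
  (exists X, feasible A b X) ->
  (0 < p)%N ->
  (* tau(p) > m' = max_{X feasible} dim span{A_i : A_i . X = b_i} *)
  (forall X, feasible A b X -> (active_dim A b X < tau p)%N) ->
  exists N : 'M[R]_n -> Prop,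
    sym_null N /\
    forall C : 'M[R]_n, symm C -> ~ N C -> sdp_attains A b C ->
      forall Y : 'M[R]_(n, p), two_critical A b C Y ->
        bm_global_min A b C Y /\ sdp_optimal A b C (Y *m Y^T).
Proof.
move=> Asym _ p0 Hdim.
pose MatI (u : {ffun 'I_(m1 + m2) -> bool}) : 'M[R]_(m1 + m2, n * n) :=
  \matrix_i (if u i then mxvec (A i) else 0).
pose NN (uf : {ffun 'I_(m1 + m2) -> bool} * {ffun 'I_p -> 'I_n}) (C : 'M[R]_n) :=
  injective uf.2 /\ (\rank (MatI uf.1) < tau p)%N /\
  exists x : PT uf.2 (\rank (MatI uf.1)) -> R, C = Phi (row_base (MatI uf.1)) x.
exists (fun C => exists uf, NN uf C); split.
  apply: null_finite => uf.
  case: (classic (injective uf.2 /\ (\rank (MatI uf.1) < tau p)%N)) => [[fi hr]|hn].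
    apply: (@null_sub _ _ _ (fun C => exists x, C = Phi (row_base (MatI uf.1)) x)).
      by move=> C _ [_ [_ [x e]]]; exists x.
    apply: null_image; last exact: Phi_LLip.
    have := PT_card fi hr. done.
  by apply: null_empty => C [fi [hr _]]; apply: hn.
move=> C hC nN hatt Y h2.
case: (ltnP (\rank Y) p) => hr.
  have [lam [hfo pS]] := psd_of_twocrit Asym hC h2 hr.
  have hfe := h2.1.
  have hopt := opt_of_psd Asym hC hfo hfe pS.
  by split; split=> // Y' hY'; apply: hopt.
exfalso; apply: nN.
have hrp : \rank Y = p by apply/eqP; rewrite eqn_leq rank_leq_col hr.
case: h2 => hfe [lam [[hpos [hcomp hSY]] _]].
have [f [fi fu]] : exists f : {ffun 'I_p -> 'I_n}, injective f /\ rowsub f Y \in unitmx.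
  have := maxrowsub_free Y; have := @maxrankfun_inj _ _ _ Y.
  move: (maxrankfun Y); rewrite hrp => g gi gf.
  by exists g; split=> //; rewrite -row_free_unit.
pose u := [ffun i => activeb A b (Y *m Y^T) i].
pose M := MatI u.
have hM : M = \matrix_(i < m1 + m2) (if activeb A b (Y *m Y^T) i then mxvec (A i) else 0).
  by apply/matrixP => i j; rewrite !mxE ffunE.
have hrk : (\rank M < tau p)%N by rewrite hM; apply: Hdim.
pose S := Smat A C lam.
have hS : S^T = S := smat_sym Asym lam hC.
pose Z := Y *m invmx (rowsub f Y).
have hFZ : (Fm R f)^T *m Z = 1%:M.
  rewrite /Z mulmxA FtA.
  have -> : \matrix_(j, l) Y (f j) l = rowsub f Y by apply/matrixP => j l; rewrite !mxE.
  exact: mulmxV.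
have hSZ : S *m Z = 0 by rewrite /Z mulmxA hSY mul0mx.
pose lamrow : 'rV[R]_(m1 + m2) := \row_i lam i.
have hsum : \sum_i lam i *: A i = vec_mx (lamrow *m M).
  rewrite -[LHS]mxvecK; congr vec_mx.
  rewrite mulmx_sum_row linear_sum /=; apply: eq_bigr => i _.
  rewrite linearZ /= rowK !mxE ffunE.
  case: (boolP (activeb A b (Y *m Y^T) i)) => h //.
  by rewrite hcomp // !scale0r.
have [mu0 hmu] : exists mu0 : 'rV[R]_(\rank M), lamrow *m M = mu0 *m row_base M.
  by apply/submxP; rewrite eq_row_base; apply: submxMl.
have [x hx] := Phi_rep fi (row_base M) mu0 hFZ hS hSZ.
exists (u, f); split=> //; split=> //; exists x.
by rewrite /= hx -hmu -hsum /S /Smat subrK.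
Qed.
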